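(* For $n\geq 2$ let $h_n$ be the number of ordered pairs of words $(w,z)$ over the alphabet $\{A,B,C,D\}$ satisfying: (i) both $w$ and $z$ start with the letter $A$, and $|w|+|z|=n$; (ii) $w$ and $z$ contain the same number of letters $A$; (iii) neither $w$ nor $z$ contains a $CB$-factor (a letter $C$ immediately followed by a letter $B$); (iv) for all $i$, if the $i$th letter $A$ from the right in $w$ is immediately preceded by a $C$ and immediately followed by a $B$, then the $i$th segment of $z$ from the left contains a letter $B$. Let $H(x)=\sum_{n\geq 2}h_nx^n$. Then \[H(x)=\frac{x^2(1-2x)}{x^6-5x^5+14x^4-26x^3+22x^2-8x+1}.\]
   Context: A segment of a word $v$ over $\{A,B,C,D\}$ is a factor (consecutive letters) that starts with a letter $A$ and ends immediately before the next letter $A$, or at the end of $v$. The $i$th segment from the left is the one starting at the $i$th letter $A$ from the left. The words $w$ and $z$ need not have the same length. *)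

(* Defs.v *)
From mathcomp Require Import all_boot all_order all_algebra.
Set Implicit Arguments. Unset Strict Implicit. Unset Printing Implicit Defensive.
Import GRing.Theory Num.Theory.

Definition letter := 'I_4.
Definition lA : letter := @Ordinal 4 0 isT.
Definition lB : letter := @Ordinal 4 1 isT.
Definition lC : letter := @Ordinal 4 2 isT.
Definition lD : letter := @Ordinal 4 3 isT.

Definition word := seq letter.

Definition starts_with_A (w : word) : bool :=
  if w is x :: _ then x == lA else false.

Definition countA (w : word) : nat := count (pred1 lA) w.

Definition noCB (w : word) : bool :=
  all (fun i => ~~ ((nth lA w i == lC) && (nth lA w i.+1 == lB)))
      (iota 0 (size w).-1).

Definition posA (w : word) : seq nat :=
  [seq i <- iota 0 (size w) | nth lA w i == lA].

(* the j-th (0-based) segment of w from the left: the factor starting at the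
   (j+1)-th letter A and ending immediately before the next A, or at the end *)
Definition segment (w : word) (j : nat) : word :=
  let s := nth 0 (posA w) j in
  let e := nth (size w) (posA w) j.+1 in
  take (e - s) (drop s w).

Definition CAB_at (w : word) (p : nat) : bool :=
  [&& 0 < p, p.+1 < size w, nth lA w p.-1 == lC & nth lA w p.+1 == lB].

(* (iv): for all i (here j = i - 1, 0-based), if the i-th A from the right in w
   is preceded by C and followed by B, then the i-th segment of z from the left
   contains a B. *)
Definition cond_iv (w z : word) : bool :=
  all (fun j => CAB_at w (nth 0 (rev (posA w)) j) ==> (lB \in segment z j))
      (iota 0 (countA w)).

Definition good (w z : word) : bool :=
  [&& starts_with_A w, starts_with_A z, countA w == countA z,
      noCB w, noCB z & cond_iv w z].

Definition h (n : nat) : nat :=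
  if n < 2 then 0
  else \sum_(k < n.+1)
         #|[pred p : (k.-tuple letter * (n - k).-tuple letter)%type
             | good (tval p.1) (tval p.2)]|.

(* Coefficients of the denominator Q(x) and numerator P(x) = x^2 (1 - 2x). *)
Definition Qcoef (k : nat) : int :=
  nth 0%R [:: 1; -8; 22; -26; 14; -5; 1]%R k.
Definition Pcoef (n : nat) : int :=
  nth 0%R [:: 0; 0; 1; -2]%R n.

(* Main.v *)
Require Import Defs.
From mathcomp Require Import all_boot all_order all_algebra zify.
Import GRing.Theory Num.Theory.


Fixpoint noCBr (w : word) : bool :=
  if w is x :: s then ~~ ((x == lC) && (head lA s == lB)) && noCBr s else true.

Lemma noCBE w : noCB w = noCBr w.
Proof.
elim: w => // x s IH /=.
rewrite -IH /noCB /=.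
case: s IH => [|y s] IH /=.
  have ->: (lA == lB) = false by [].
  by rewrite andbF.
rewrite -[1]/(1+0) iotaDl all_map.
congr (_ && _); apply: eq_all => i /=; by rewrite add1n.
Qed.

Lemma noCBr_cat s t :
  noCBr (s ++ t) = [&& noCBr s, noCBr t & ~~ ((last lA s == lC) && (head lA t == lB))].
Proof.
elim: s => [|x s IH] /=; first by rewrite andbT.
rewrite IH; case: s IH => [|y s] IH /=.
  by case: (x == lC); case: (head lA t == lB); case: (noCBr t).
by case: (x == lC); case: (y == lB); case: (noCBr (y::s)) ; case: (noCBr t); case: (last y s == lC); case: (head lA t == lB); rewrite /= ?andbF ?andbT.
Qed.

Lemma posA_cat s t : posA (s ++ t) = posA s ++ map (addn (size s)) (posA t).
Proof.
rewrite /posA size_cat iotaD filter_cat; congr (_ ++ _).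
  apply: eq_in_filter => i; rewrite mem_iota add0n => /andP[_ lt].
  by rewrite nth_cat lt.
rewrite add0n -{1}[size s]addn0 iotaDl filter_map; congr map.
apply: eq_in_filter => i _ /=; by rewrite nth_cat ltnNge leq_addr /= addKn.
Qed.

Lemma posA_noA r : lA \notin r -> posA r = [::].
Proof.
move=> nr; rewrite /posA; apply/eqP; rewrite -[_ == _]negbK -has_filter.
apply/negP => /hasP [i]; rewrite mem_iota add0n => /andP[_ lt] /eqP e.
by move: nr; rewrite -e mem_nth.
Qed.

Lemma posA_A : posA [:: lA] = [:: 0].
Proof. by []. Qed.

Lemma nth_map_addn d x0 (s : seq nat) i : nth (d + x0) (map (addn d) s) i = d + nth x0 s i.
Proof. by elim: s i => [|y s IH] [|i] //=. Qed.



Lemma countA_noA r : lA \notin r -> countA r = 0.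
Proof. by move=> h; apply/count_memPn. Qed.

Lemma lAB : (lA == lB) = false. Proof. by []. Qed.
Lemma lAC : (lA == lC) = false. Proof. by []. Qed.

Lemma CAB_first w' r :
  CAB_at (w' ++ lA :: r) (size w') = (last lA w' == lC) && (head lA r == lB).
Proof.
rewrite /CAB_at size_cat /=.
case: w' => [|x w'] //=.
rewrite -cat_cons nth_cat /= ltnSn.
have -> : size w' = (size (x :: w')).-1 by [].
rewrite nth_last /=.
have -> : nth lA (w' ++ lA :: r) (size w').+1 = nth lA r 0.
  by rewrite nth_cat ltnNge leqnSn /= subSn // subnn.
case: r => [|y r] /=; first by rewrite lAB !andbF.
have -> : (size w').+2 < (size w').+1 + (size r).+2 by lia.
by [].
Qed.

Lemma CAB_prev w' r p : p < size w' -> nth lA w' p == lA ->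
  CAB_at (w' ++ lA :: r) p = CAB_at w' p.
Proof.
move=> lt hA; rewrite /CAB_at size_cat /=.
case: p lt hA => [|p] lt hA //=.
rewrite nth_cat (leq_ltn_trans (leqnSn p) lt).
have [lt2|ge2] := ltnP p.+2 (size w').
  rewrite nth_cat lt2.
  have -> : p.+2 < size w' + (size r).+1 by lia.
  by [].
have e : size w' = p.+2 by lia.
rewrite nth_cat e ltnn subnn /= lAB !andbF.
by [].
Qed.

Lemma posA_seg z' v : lA \notin v ->
  posA (lA :: v ++ z') = 0 :: map (addn (1 + size v)) (posA z').
Proof.
move=> nv.
rewrite -cat1s posA_cat posA_A posA_cat posA_noA //=.
congr (_ :: _); rewrite -!map_comp; apply: eq_map => x /=; by rewrite addnA.
Qed.

Lemma seg0 z' v : lA \notin v -> head lA z' == lA ->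
  segment (lA :: v ++ z') 0 = lA :: v.
Proof.
move=> nv hz; rewrite /segment posA_seg //= subn0.
case: z' hz => [|y z'] hz /=.
  by rewrite cats0 /= take_size.
rewrite -cat1s posA_cat.
have -> : posA [:: y] = [:: 0] by move: hz => /= /eqP ->.
by rewrite /= add0n addn0 take_size_cat.
Qed.

Lemma segS z' v j : lA \notin v -> j < size (posA z') ->
  segment (lA :: v ++ z') j.+1 = segment z' j.
Proof.
move=> nv lt; rewrite /segment posA_seg //=.
have -> : (size (v ++ z')).+1 = (1 + size v) + size z' by rewrite size_cat add1n.
rewrite nth_map_addn (nth_map 0) // subnDl [X in drop X _]addnC -drop_drop.
have -> : drop (1 + size v) (lA :: v ++ z') = z'.
  by rewrite add1n /= drop_size_cat.
by [].
Qed.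


Lemma size_posA w : size (posA w) = countA w.
Proof.
rewrite /posA size_filter /countA -{3}(mkseq_nth lA w) /mkseq count_map.
by apply: eq_count.
Qed.

Lemma countA_seg w' r : lA \notin r -> countA (w' ++ lA :: r) = (countA w').+1.
Proof. move=> nr; rewrite /countA count_cat /= (count_memPn nr). by rewrite addn1. Qed.

Lemma posA_last w' r : lA \notin r -> posA (w' ++ lA :: r) = rcons (posA w') (size w').
Proof.
move=> nr; rewrite posA_cat -cat1s posA_cat posA_A (@posA_noA r nr) /= addn0 cats1.
by [].
Qed.

Lemma cond_iv_dec w' r v z' : lA \notin r -> lA \notin v -> head lA z' == lA ->
  countA w' = countA z' ->
  cond_iv (w' ++ lA :: r) (lA :: v ++ z') =
  ((last lA w' == lC) && (head lA r == lB) ==> (lB \in v)) && cond_iv w' z'.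
Proof.
move=> nr nv hz cwz.
rewrite /cond_iv countA_seg // posA_last // rev_rcons /=.
rewrite CAB_first seg0 // in_cons /=.
congr (_ && _).
rewrite -[1]/(1+0) iotaDl all_map; apply: eq_in_all => j.
rewrite mem_iota add0n => jlt /=.
set p := nth 0 (rev (posA w')) j.
have pin : p \in posA w'.
  by rewrite -mem_rev /p mem_nth // size_rev size_posA.
move: pin; rewrite mem_filter mem_iota add0n => /andP[hA /andP[_ plt]].
rewrite CAB_prev // -[1 + j]/(j.+1) segS //.
by rewrite size_posA -cwz.
Qed.

Definition Good0 (w z : word) : bool :=
  [&& head lA w == lA, head lA z == lA, countA w == countA z,
      noCB w, noCB z & cond_iv w z].

Lemma Good0_dec w' r v z' : lA \notin r -> lA \notin v -> head lA z' == lA ->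
  Good0 (w' ++ lA :: r) (lA :: v ++ z') =
  [&& Good0 w' z', noCB r, noCB v &
      ~~ [&& last lA w' == lC, head lA r == lB & lB \notin v]].
Proof.
move=> nr nv hz.
rewrite /Good0 countA_seg //.
have -> : countA (lA :: v ++ z') = (countA z').+1.
  by rewrite /countA /= count_cat (count_memPn nv) add1n.
rewrite eqSS hz /=.
have -> : head lA (w' ++ lA :: r) == lA = (head lA w' == lA) by case: w'.
case: (head lA w' == lA); last by [].
case: eqP => cwz; last by [].
rewrite cond_iv_dec //.
rewrite !noCBE noCBr_cat /= noCBr_cat.
have -> : (head lA z' == lB) = false by move/eqP: hz => ->.
case: (last lA w' == lC); case: (head lA r == lB); case: (lB \in v);
case: (noCBr w'); case: (noCBr r); case: (noCBr v);
case: (noCBr z'); case: (cond_iv w' z'); by rewrite /= ?andbF ?andbT.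
Qed.


Definition runZ (u : word) (rw : word -> bool -> bool -> bool) :
  word -> bool -> bool -> bool :=
  fix rz z pf lc := match z with
  | [::] => u == [::]
  | y :: z' => if y == lA then rw z' pf false
               else if y == lB then ~~ lc && rz z' false false
               else if y == lC then rz z' pf true
               else rz z' pf false
  end.

Fixpoint runW (u z : word) (pend hb : bool) {struct u} : bool :=
  match u with
  | [::] => false
  | x :: u' => if x == lA then runZ u' (runW u') z hb false
               else if x == lB then runW u' z false true
               else if x == lC then ~~ (pend || hb) && runW u' z false false
               else runW u' z false false
  end.

Lemma letter_cases (x : letter) : [\/ x = lA, x = lB, x = lC | x = lD].
Proof.
case: x => [[|[|[|[|m]]]] Hm].
- by apply: Or41; apply: val_inj.
- by apply: Or42; apply: val_inj.
- by apply: Or43; apply: val_inj.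
- by apply: Or44; apply: val_inj.
- by [].
Qed.

Lemma eqL : ((lA == lB) = false) * ((lA == lC) = false) * ((lA == lD) = false) *
  ((lB == lA) = false) * ((lB == lC) = false) * ((lB == lD) = false) *
  ((lC == lA) = false) * ((lC == lB) = false) * ((lC == lD) = false) *
  ((lD == lA) = false) * ((lD == lB) = false) * ((lD == lC) = false).
Proof. by []. Qed.

Lemma Wseg r u' z pend hb : lA \notin r ->
  runW (rev r ++ lA :: u') z pend hb =
  [&& noCBr r, ~~ ((pend || hb) && (last lA r == lC)) &
      runZ u' (runW u') z (head (if hb then lB else lA) r == lB) false].
Proof.
elim/last_ind: r pend hb => [|r0 x IH] pend hb.
  by move=> _ /=; rewrite eqL andbF; case: hb.
rewrite -cats1 mem_cat mem_seq1 negb_or => /andP[nr0 xA].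
rewrite rev_cat /= noCBr_cat /= last_cat /= andbT.
have hd : forall d, head d (r0 ++ [:: x]) = if r0 is y :: _ then y else x by case: r0 {IH nr0}.
rewrite hd.
case: (letter_cases x) xA => -> xA; rewrite ?eqxx // ?eqL /= IH //.
all: case: r0 {IH nr0 hd} => [|y r0] /=; rewrite ?eqL ?eqxx /= ?andbT ?andbF ?orbF ?orbT //.
all: by case: (noCBr r0); case: (runZ u' (runW u') z (y == lB) false);
  case: (y == lC); case: (head lA r0 == lB); case: (last y r0 != lC); case: pend; case: hb.
Qed.

Lemma Zseg v z' u rw pf lc : lA \notin v -> head lA z' == lA ->
  runZ u rw (v ++ z') pf lc =
  [&& noCBr v, ~~ (lc && (head lA v == lB)) &
      (if z' is _ :: z'' then rw z'' (pf && (lB \notin v)) false else u == [::])].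
Proof.
move=> + hz; elim: v pf lc => [|y v IH] pf lc.
  move=> _ /=; case: z' hz => [|y z''] /= hz; first by rewrite eqL andbF.
  by rewrite hz eqL andbF andbT.
rewrite in_cons negb_or => /andP[yA nv] /=.
rewrite in_cons.
case: (letter_cases y) yA => -> yA; rewrite ?eqxx // ?eqL /= IH //.
all: case: v {IH nv} => [|y' v] /=; rewrite ?eqL ?eqxx /= ?andbT ?andbF ?orbF ?orbT //.
all: by case: (match z' with [::] => u == [::] | _ :: _ => _ end); case: lc;
  case: (y' == lC); case: (y' == lB); case: (head lA v == lB); case: (noCBr v).
Qed.

Lemma noA_runW r z p hb : lA \notin r -> runW (rev r) z p hb = false.
Proof.
elim/last_ind: r p hb => [|r0 x IH] p hb //.
rewrite -cats1 mem_cat mem_seq1 negb_or => /andP[nr0 xA].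
rewrite rev_cat /=.
case: (letter_cases x) xA => -> xA; rewrite ?eqxx // ?eqL /= IH //.
by rewrite andbF.
Qed.

Lemma splitA w : lA \in w -> exists w' r, w = w' ++ lA :: r /\ lA \notin r.
Proof.
elim/last_ind: w => [|s x IH] //.
rewrite -cats1 mem_cat mem_seq1.
case xA: (lA == x).
  by move=> _; exists s, [::]; rewrite -(eqP xA).
rewrite orbF => /IH [w' [r [-> nr]]].
exists w', (rcons r x); split; first by rewrite -cats1 -catA.
by rewrite -cats1 mem_cat mem_seq1 xA orbF.
Qed.

Lemma splitZ z0 : exists v z', z0 = v ++ z' /\ lA \notin v /\ head lA z' == lA.
Proof.
elim: z0 => [|y s [v [z' [-> [nv hz]]]]]; first by exists [::], [::].
case yA: (y == lA).
  by exists [::], (y :: v ++ z'); rewrite /= yA.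
by exists (y :: v), z'; rewrite in_cons eq_sym yA.
Qed.

Lemma Good0_nil z : Good0 [::] (lA :: z) = false.
Proof. by []. Qed.

Lemma Good0_nil2 w : w != [::] -> Good0 w [::] = false.
Proof.
case: w => [|x w] // _; rewrite /Good0 /countA /=.
by case: (x == lA).
Qed.

Lemma Good0_head w z : Good0 w z -> head lA w == lA.
Proof. by case/andP. Qed.

Lemma runW_correct n w z0 pend : size w < n ->
  runW (rev w) z0 pend false =
  [&& w != [::], Good0 w (lA :: z0) & ~~ (pend && (last lA w == lC))].
Proof.
elim: n w z0 pend => [|n IH] w z0 pend //= sz.
have [Aw|nAw] := boolP (lA \in w); last first.
  rewrite noA_runW //; case: w sz nAw => [|x w] //= sz nAw.
  case G: (Good0 _ _) => //; move: (@Good0_head _ _ G) => /= /eqP xA.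
  by move: nAw; rewrite xA mem_head.
have [w' [r [ew nr]]] := splitA _ Aw; subst w.
have [v [z' [ez [nv hz]]]] := splitZ z0; subst z0.
rewrite rev_cat rev_cons cat_rcons Wseg // Zseg // Good0_dec //.
rewrite last_cat /= orbF.
have -> : (w' ++ lA :: r != [::]) = true by case: w' {Aw sz}.
rewrite !noCBE /=.
case: z' hz => [|y z''] /= hz.
  case: w' {Aw sz} => [|x w'] /=.
    by case: (noCBr r); case: (noCBr v); case: pend; case: (last lA r == lC).
  rewrite Good0_nil2 //= ?andbF.
  have -> : (rev (x :: w') == [::]) = false by rewrite rev_cons; case: (rev w').
  by rewrite !andbF.
rewrite (eqP hz) IH; last by move: sz; rewrite size_cat /=; lia.
case: w' {Aw sz IH} => [|x w']; first by rewrite Good0_nil /= !andbF.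
rewrite /=.
by case: (Good0 _ _); case: (noCBr r); case: (noCBr v); case: pend; case: (last lA r == lC);
  case: (last x w' == lC); case: (head lA r == lB); case: (lB \in v).
Qed.

Lemma good_run w z : good w z =
  (if z is x :: z0 then (x == lA) && runW (rev w) z0 false false else false).
Proof.
case: z => [|x z0]; first by rewrite /good /= andbF.
rewrite (@runW_correct (size w).+1) // andbT.
rewrite /good /Good0 /=.
case: eqP => [->|_] /=; last by rewrite andbF.
case: w => [|y w] //=.
Qed.



Definition lets : seq letter := [:: lA; lB; lC; lD].

Lemma mem_lets x : x \in lets.
Proof. by case: (letter_cases x) => ->. Qed.

Fixpoint AW (k : nat) : seq word :=
  if k is k'.+1 then [seq x :: s | x <- lets, s <- AW k'] else [:: [::]].

Lemma AW_mem k w : (w \in AW k) = (size w == k).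
Proof.
elim: k w => [|k IH] w; first by case: w.
apply/allpairsP/idP.
  by case=> [[x s]] /= [_ hs ->]; rewrite /= eqSS -IH.
case: w => [|x s] //= hs; exists (x, s); split => //; first exact: mem_lets.
by rewrite IH.
Qed.

Lemma AW_uniq k : uniq (AW k).
Proof.
elim: k => [|k IH]; first by [].
apply: (@allpairs_uniq _ _ _ (fun x s => x :: s) lets (AW k)) => //.
by move=> [x1 s1] [x2 s2] _ _ /= [-> ->].
Qed.

Lemma sum_tuple k (F : word -> nat) :
  \sum_(t : k.-tuple letter) F (tval t) = \sum_(w <- AW k) F w.
Proof.
rewrite -(big_map (@tval k letter) xpredT F).
apply: perm_big; apply: uniq_perm.
- by rewrite map_inj_uniq ?index_enum_uniq //; exact: val_inj.
- exact: AW_uniq.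
move=> w; rewrite AW_mem; apply/mapP/idP.
  by case=> t _ ->; rewrite size_tuple.
move=> /eqP hs; exists (Tuple (introT eqP hs)) => //; exact: mem_index_enum.
Qed.

Lemma card_good k m :
  #|[pred p : (k.-tuple letter * m.-tuple letter)%type | good (tval p.1) (tval p.2)]| =
  \sum_(w <- AW k) \sum_(z <- AW m) good w z.
Proof.
rewrite -sum1_card big_mkcond /=.
rewrite -(pair_bigA _ (fun (t1 : k.-tuple letter) (t2 : m.-tuple letter) =>
             if good t1 t2 then 1 else 0)) /=.
rewrite -(@sum_tuple k (fun w => \sum_(z <- AW m) good w z)).
apply: eq_bigr => t1 _.
rewrite -(@sum_tuple m (fun z => (good t1 z : nat))).
by apply: eq_bigr => t2 _; case: (good _ _).
Qed.

Definition S (F : word -> word -> nat) n :=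
  \sum_(k < n.+1) \sum_(u <- AW k) \sum_(z <- AW (n - k)) F u z.

Lemma S_ext F G n : (forall u z, F u z = G u z) -> S F n = S G n.
Proof.
move=> e; apply: eq_bigr => k _; apply: eq_bigr => u _; apply: eq_bigr => z _; exact: e.
Qed.

Lemma S0 n : S (fun _ _ => 0) n = 0.
Proof. by rewrite /S big1 // => k _; rewrite big1 // => u _; rewrite big1. Qed.

Lemma AWS k : AW k.+1 = [seq x :: s | x <- lets, s <- AW k].
Proof. by []. Qed.

Lemma S_peel_z F n : S F n.+1 =
  \sum_(u <- AW n.+1) F u [::] + \sum_(y <- lets) S (fun u z => F u (y :: z)) n.
Proof.
rewrite /S big_ord_recr. change (ssrnat_addn__canonical__Monoid_Law ?a ?b) with (a + b).
rewrite addnC; congr (_ + _).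
  have -> : n.+1 - @ord_max n.+1 = 0 by apply: subnn.
  by apply: eq_bigr => u _; rewrite big_seq1.
symmetry; rewrite exchange_big; symmetry.
apply: eq_bigr => k _.
have -> : n.+1 - widen_ord (leqnSn n.+1) k = (n - k).+1 by rewrite /= subSn // -ltnS.
rewrite AWS.
have -> : AW (widen_ord (leqnSn n.+1) k) = AW k by [].
symmetry; rewrite exchange_big; symmetry.
apply: eq_bigr => u _.
by rewrite big_allpairs_dep.

Qed.

Lemma S_peel_w F n : S F n.+1 =
  \sum_(z <- AW n.+1) F [::] z + \sum_(x <- lets) S (fun u z => F (x :: u) z) n.
Proof.
rewrite /S big_ord_recl.
change (ssrnat_addn__canonical__Monoid_Law ?a ?b) with (a + b).
congr (_ + _).
  have -> : n.+1 - @ord0 n.+1 = n.+1 by apply: subn0.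
  by rewrite big_seq1.
symmetry; rewrite exchange_big; symmetry.
apply: eq_bigr => k _.
have -> : n.+1 - lift ord0 k = n - k by rewrite /= subSS.
have -> : AW (lift ord0 k) = AW k.+1 by [].
by rewrite AWS big_allpairs_dep.
Qed.

Lemma rev_inj (T : Type) : injective (@rev T).
Proof. exact: (can_inj (@revK T)). Qed.

Lemma S_rev F n : S (fun u z => F (rev u) z) n = S F n.
Proof.
apply: eq_bigr => k _.
rewrite -(big_map rev xpredT (fun u => \sum_(z <- AW (n - k)) F u z)).
apply: perm_big; apply: uniq_perm.
- by rewrite map_inj_uniq ?AW_uniq //; exact: (@rev_inj _).
- exact: AW_uniq.
move=> u; rewrite -{1}(revK u) (mem_map (@rev_inj _)) !AW_mem size_rev //.
Qed.

Inductive st := SW of bool & bool | SZ of bool & bool.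

Definition run (s : st) (u z : word) : bool :=
  match s with
  | SW p b => runW u z p b
  | SZ pf lc => runZ u (runW u) z pf lc
  end.

Definition N s n := S (fun u z => run s u z : nat) n.

Lemma N0W p b : N (SW p b) 0 = 0.
Proof. by rewrite /N /S big_ord1 /= big_seq1 big_seq1. Qed.

Lemma N0Z p b : N (SZ p b) 0 = 1.
Proof. by rewrite /N /S big_ord1 /= big_seq1 big_seq1. Qed.

Lemma NW p b n : N (SW p b) n.+1 =
  N (SZ b false) n + N (SW false true) n + (if p || b then 0 else N (SW false false) n)
  + N (SW false false) n.
Proof.
rewrite /N S_peel_w big1 // add0n /lets !big_cons big_nil addn0 !addnA.
congr (_ + _ + _ + _).
case: ifP => h; first rewrite -(S0 n).
  by apply: S_ext => u z /=; rewrite ?eqxx ?eqL h.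
by apply: S_ext => u z /=; rewrite ?eqxx ?eqL h.
Qed.

Lemma NZ p b n : N (SZ p b) n.+1 =
  N (SW p false) n + (if b then 0 else N (SZ false false) n) + N (SZ p true) n
  + N (SZ p false) n.
Proof.
rewrite /N S_peel_z big_seq_cond big1 ?add0n; last first.
  by move=> u /andP[]; rewrite AW_mem /=; case: u.
rewrite /lets !big_cons big_nil addn0 !addnA.
congr (_ + _ + _ + _).
case: b; first rewrite -(S0 n).
  by apply: S_ext => u z /=; rewrite ?eqxx ?eqL.
by apply: S_ext => u z /=; rewrite ?eqxx ?eqL.
Qed.

Lemma h_N n : h n.+2 = N (SW false false) n.+1.
Proof.
rewrite /h /=.
rewrite (eq_bigr (fun k : 'I_n.+3 => \sum_(w <- AW k) \sum_(z <- AW (n.+2 - k)) good w z));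
  last by move=> k _; rewrite card_good.
change (S (fun w z => good w z : nat) n.+2 = N (SW false false) n.+1).
rewrite S_peel_z big1 ?add0n; last by move=> u _; rewrite good_run.
have Z0 : forall y, y != lA -> S (fun w z => good w (y :: z) : nat) n.+1 = 0.
  move=> y hy; transitivity (S (fun _ _ => 0) n.+1); last exact: S0.
  apply: S_ext => u z.
  by rewrite good_run (negbTE hy).
rewrite /lets big_cons big1_seq ?addn0; last first.
  move=> y /andP[_]; rewrite !in_cons orbF => hy; apply: Z0.
  by case/or3P: hy => /eqP ->.
rewrite /N -(S_rev (fun u z => run (SW false false) u z : nat)).
apply: S_ext => u z.
by rewrite good_run eqxx.
Qed.



Lemma hN n : h n.+1 = N (SW false false) n.
Proof. case: n => [|n]; first by rewrite N0W. exact: h_N. Qed.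

Lemma h0 : h 0 = 0%N. Proof. by []. Qed.

Local Open Scope ring_scope.

Lemma big_tail m (F : nat -> int) : (7 <= m)%N ->
  \sum_(k < m) Qcoef k * F k = \sum_(k < 7) Qcoef k * F k.
Proof.
rewrite -(big_mkord xpredT (fun k => Qcoef k * F k)) -(big_mkord xpredT (fun k => Qcoef k * F k)).
move=> hm; rewrite (@big_cat_nat _ _ _ 7) //= [X in _ + X]big1_seq ?addr0 // => i /andP[_].
rewrite mem_iota => /andP[hi _].
rewrite /Qcoef nth_default ?mul0r //.
Qed.

Lemma hvals : h 1 = 0%N /\ h 2 = 1%N /\ h 3 = 6%N /\ h 4 = 26%N /\ h 5 = 102%N /\ h 6 = 386%N.
Proof.
rewrite !hN.
have := (NW false false 0, NW false true 0, NW true false 0, NZ false false 0, NZ false true 0,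
  NZ true false 0, NZ true true 0).
have := (NW false false 1, NW false true 1, NW true false 1, NZ false false 1, NZ false true 1,
  NZ true false 1, NZ true true 1).
have := (NW false false 2, NW false true 2, NW true false 2, NZ false false 2, NZ false true 2,
  NZ true false 2, NZ true true 2).
have := (NW false false 3, NW false true 3, NW true false 3, NZ false false 3, NZ false true 3,
  NZ true false 3, NZ true true 3).
have := (NW false false 4, NW false true 4, NW true false 4, NZ false false 4, NZ false true 4,
  NZ true false 4, NZ true true 4).
rewrite /= !N0W !N0Z.
move=> [[[[[[? ?] ?] ?] ?] ?] ?].
move=> [[[[[[? ?] ?] ?] ?] ?] ?].
move=> [[[[[[? ?] ?] ?] ?] ?] ?].
move=> [[[[[[? ?] ?] ?] ?] ?] ?].
move=> [[[[[[? ?] ?] ?] ?] ?] ?].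
repeat split; lia.
Qed.

Lemma small_rec n : (n <= 6)%N ->
  \sum_(k < n.+1) Qcoef k * (h (n - k))%:Z = Pcoef n.
Proof.
move=> hn; have [H1 [H2 [H3 [H4 [H5 H6]]]]] := hvals.
do 7?[case: n hn => [|n] hn]; last by [].
all: rewrite !big_ord_recl big_ord0 /= /bump /=.
all: rewrite ?add1n ?addn0 ?subn0 ?subSS ?subnn.
all: rewrite /Qcoef /Pcoef /=.
all: rewrite ?subSS ?subn0 ?h0 ?H1 ?H2 ?H3 ?H4 ?H5 ?H6.
all: by [].
Qed.

Lemma big_rec m :
  \sum_(k < m.+4.+4) Qcoef k * (h (m.+4.+3 - k))%:Z = 0.
Proof.
rewrite (@big_tail m.+4.+4 (fun k => (h (m.+4.+3 - k))%:Z)) //.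
rewrite !big_ord_recl big_ord0 /= /bump /=.
rewrite ?add1n ?addn0 ?subSS ?subn0 /Qcoef /=.
rewrite !hN.
have Eq := fun j => (NW false false j, NW false true j, NW true false j, NZ false false j,
  NZ false true j, NZ true false j, NZ true true j).
have := Eq m; have := Eq m.+1; have := Eq m.+2; have := Eq m.+3; have := Eq m.+4;
  have := Eq m.+4.+1; clear Eq; rewrite /=.
do 6 move=> [[[[[[? ?] ?] ?] ?] ?] ?].
lia.
Qed.

Theorem theorem3p3 :
  forall n : nat,
    \sum_(k < n.+1) Qcoef k * (h (n - k))%:Z = Pcoef n.
Proof.
move=> n; case: (leqP n 6) => hn; first exact: small_rec.
have -> : n = (n - 7).+4.+3 by lia.
by rewrite big_rec /Pcoef /= ?nth_nil.
Qed.
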